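(* Let $\pi$ be any policy. Then for every state $s\in\mathcal S$, $$g^\pi(s)\;\le\;V^{\pi}(s)-V^{\pi^*}(s)\;\le\;(1-\gamma)^{-1}\max_{s'\in\mathcal S} g^{\pi}(s').$$
   Context: An infinite-horizon discounted MDP is given by a finite state space $\mathcal S$, a finite action space $\mathcal A$, transition probabilities $\mathcal P(s'\mid s,a)$, a cost $c:\mathcal S\times\mathcal A\to\mathbb R$ and a discount factor $\gamma\in[0,1)$. $\Delta_{|\mathcal A|}$ denotes the probability simplex over $\mathcal A$. A (feasible) policy $\pi$ assigns to each $s$ a distribution $\pi(\cdot\mid s)\in\Delta_{|\mathcal A|}$. For each state $s$, $p\mapsto h^{p}(s)$ is a closed convex function on $\Delta_{|\mathcal A|}$ (the regularizer). The value functions are $V^\pi(s)=\mathbb E\big[\sum_{t\ge0}\gamma^t\,(c(s_t,a_t)+h^{\pi(\cdot\mid s_t)}(s_t))\mid s_0=s,\ a_t\sim\pi(\cdot\mid s_t),\ s_{t+1}\sim\mathcal P(\cdot\mid s_t,a_t)\big]$ and $Q^\pi(s,a)$ is defined by the same expression with the additional condition $a_0=a$. $\pi^*$ denotes an optimal policy, i.e. $V^{\pi^*}(s)\le V^\pi(s)$ for all policies $\pi$ and all $s$ (assumed to exist). For $p\in\Delta_{|\mathcal A|}$ the advantage function is $\psi^\pi(s,p):=\langle Q^\pi(s,\cdot),p\rangle-V^\pi(s)+h^{p}(s)-h^{\pi(\cdot\mid s)}(s)$, and the advantage gap function is $g^\pi(s):=\max_{p\in\Delta_{|\mathcal A|}}\{-\psi^\pi(s,p)\}$.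 *)

(* Defs.v *)
From HB Require Import structures.
From mathcomp Require Import all_boot all_order all_algebra.
From mathcomp Require Import all_classical all_reals all_analysis.
Set Implicit Arguments. Unset Strict Implicit. Unset Printing Implicit Defensive.
Import Order.TTheory GRing.Theory Num.Theory.
Local Open Scope ring_scope.
Local Open Scope classical_set_scope.

Section MDP.
Variables (R : realType) (S A : finType).

Definition in_simplex (p : A -> R) : Prop :=
  (forall a, 0 <= p a) /\ \sum_(a : A) p a = 1.

Definition feasible_policy (pi : S -> A -> R) : Prop :=
  forall s, in_simplex (pi s).

(* transition kernel P s a s' = P(s' | s, a) *)
Definition transition_kernel (P : S -> A -> S -> R) : Prop :=
  forall s a, (forall s', 0 <= P s a s') /\ \sum_(s' : S) P s a s' = 1.

(* p |-> h s p is a closed (lower semicontinuous) convex function on the simplex *)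
Definition closed_convex_on_simplex (f : (A -> R) -> R) : Prop :=
  (forall p q (t : R), in_simplex p -> in_simplex q -> 0 <= t <= 1 ->
     f (fun a => t * p a + (1 - t) * q a) <= t * f p + (1 - t) * f q) /\
  (forall p e, in_simplex p -> 0 < e -> exists2 d : R, 0 < d &
     forall q, in_simplex q -> (forall a, `|q a - p a| < d) -> f p - e < f q).

Variables (P : S -> A -> S -> R) (c : S -> A -> R) (h : S -> (A -> R) -> R)
  (gamma : R).

Definition stage_cost (pi : S -> A -> R) (s : S) : R :=
  \sum_(a : A) pi s a * c s a + h s (pi s).

(* t-step state distribution of the chain under pi started at s:
   dist pi t s s' = Pr(s_t = s' | s_0 = s) *)
Fixpoint state_dist (pi : S -> A -> R) (t : nat) (s s' : S) : R :=
  match t with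
  | 0 => (s == s')%:R
  | t'.+1 => \sum_(u : S) state_dist pi t' s u *
                 (\sum_(a : A) pi u a * P u a s')
  end.

(* V^pi(s) = E[ sum_t gamma^t (c(s_t,a_t) + h^{pi(.|s_t)}(s_t)) | s_0 = s ] *)
Definition Vfun (pi : S -> A -> R) (s : S) : R :=
  limn (fun N => \sum_(0 <= t < N) (gamma ^+ t *
     \sum_(s' : S) state_dist pi t s s' * stage_cost pi s')).

(* Q^pi(s,a): same expectation with additionally a_0 = a *)
Definition Qfun (pi : S -> A -> R) (s : S) (a : A) : R :=
  limn (fun N => \sum_(0 <= t < N)
    (match t with
     | 0 => c s a + h s (pi s)
     | t'.+1 => gamma ^+ t *
         \sum_(s1 : S) P s a s1 *
            \sum_(s' : S) state_dist pi t' s1 s' * stage_cost pi s'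
     end)).

Definition advantage (pi : S -> A -> R) (s : S) (p : A -> R) : R :=
  \sum_(a : A) Qfun pi s a * p a - Vfun pi s + h s p - h s (pi s).

(* advantage gap function g^pi(s) = max_{p in simplex} - psi^pi(s,p)
   (the max is attained since h s is closed convex on the compact simplex) *)
Definition adv_gap (pi : S -> A -> R) (s : S) : R :=
  sup [set - advantage pi s p | p in in_simplex].

End MDP.

(* Main.v *)
Require Import Defs.
From HB Require Import structures.
From mathcomp Require Import all_boot all_order all_algebra.
From mathcomp Require Import all_classical all_reals all_analysis.
From mathcomp Require Import ring lra.
Import Order.TTheory GRing.Theory Num.Theory.
Import numFieldNormedType.Exports.
Set Implicit Arguments. Unset Strict Implicit. Unset Printing Implicit Defensive.
Local Open Scope ring_scope.
Local Open Scope classical_set_scope.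

Section Aux.
Variable R : realType.

Lemma geo_cvg (a : R ^nat) (B g : R) : 0 <= g -> g < 1 ->
  (forall t, `|a t| <= B * g ^+ t) -> cvgn (series a).
Proof.
move=> g0 g1 Ha.
have B0 : 0 <= B by have := Ha 0%N; rewrite expr0 mulr1; apply: le_trans.
apply: normed_cvg.
apply: (@series_le_cvg R (fun n => `|a n|) (geometric B g)).
- by move=> n.
- by move=> n; rewrite /geometric /= mulr_ge0 // exprn_ge0.
- by move=> n; exact: Ha.
- by apply: is_cvg_geometric_series; rewrite ger0_norm.
Qed.

Lemma cvg_fsum (I : finType) (f : I -> nat -> R) (l : I -> R) :
  (forall i, f i n @[n --> \oo] --> l i) ->
  (\sum_(i : I) f i n) @[n --> \oo] --> \sum_(i : I) l i.
Proof.
move=> H; apply: cvg_big => //.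
exact: add_continuous.
Qed.

Lemma sum_delta_l (I : finType) (i : I) (F : I -> R) :
  \sum_(j : I) (i == j)%:R * F j = F i.
Proof.
rewrite (bigD1 i) //= eqxx mul1r big1 ?addr0 // => j /negbTE.
by rewrite eq_sym => ->; rewrite mul0r.
Qed.

Lemma sum_delta_r (I : finType) (i : I) (F : I -> R) :
  \sum_(j : I) F j * (j == i)%:R = F i.
Proof.
rewrite (bigD1 i) //= eqxx mulr1 big1 ?addr0 // => j /negbTE ->.
by rewrite mulr0.
Qed.

Lemma le_sum1 (I : finType) (F : I -> R) i :
  (forall j, 0 <= F j) -> F i <= \sum_j F j.
Proof. by move=> H; rewrite (bigD1 i) //= lerDl sumr_ge0. Qed.

Definition bmax (I : finType) (F : I -> R) := \big[Num.max/0]_(i : I) F i.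

Lemma le_bmax (I : finType) (F : I -> R) i : F i <= bmax F.
Proof. by rewrite /bmax (bigD1 i) //= le_max lexx. Qed.

Lemma bmax_le (I : finType) (F : I -> R) x :
  0 <= x -> (forall i, F i <= x) -> bmax F <= x.
Proof.
move=> x0 H; rewrite /bmax; apply: (big_ind (fun y => y <= x)) => //.
by move=> y z Hy Hz; rewrite ge_max Hy Hz.
Qed.

Lemma wavg_le (I : finType) (w F : I -> R) m :
  (forall i, 0 <= w i) -> \sum_i w i = 1 -> (forall i, F i <= m) ->
  \sum_i w i * F i <= m.
Proof.
move=> w0 w1 H; apply: (@le_trans _ _ (\sum_i w i * m)).
  by apply: ler_sum => i _; apply: ler_wpM2l.
by rewrite -mulr_suml w1 mul1r.
Qed.

End Aux.

Section MDPaux.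
Variables (R : realType) (S A : finType).
Variables (P : S -> A -> S -> R) (c : S -> A -> R) (h : S -> (A -> R) -> R)
  (gamma : R).
Hypothesis HP : transition_kernel P.
Hypothesis g0 : 0 <= gamma.
Hypothesis g1 : gamma < 1.

Definition Pw (p : A -> R) u s' := \sum_(a : A) p a * P u a s'.

Lemma Pw_ge0 p u s' : in_simplex p -> 0 <= Pw p u s'.
Proof.
move=> [p0 _]; apply: sumr_ge0 => a _; apply: mulr_ge0 => //.
exact: (HP u a).1.
Qed.

Lemma Pw_sum1 p u : in_simplex p -> \sum_s' Pw p u s' = 1.
Proof.
move=> [_ p1]; rewrite /Pw exchange_big /= -p1; apply: eq_bigr => a _.
by rewrite -mulr_sumr (HP u a).2 mulr1.
Qed.

Variable pol : S -> A -> R.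
Hypothesis Hpol : feasible_policy pol.

Lemma dist_ge0 t s s' : 0 <= state_dist P pol t s s'.
Proof.
elim: t s' => [|t IH] s' /=; first by case: (s == s').
apply: sumr_ge0 => u _; apply: mulr_ge0 => //; exact: (Pw_ge0 _ _ (Hpol u)).
Qed.

Lemma dist_sum1 t s : \sum_s' state_dist P pol t s s' = 1.
Proof.
elim: t => [|t IH] /=.
  by rewrite (bigD1 s) //= eqxx big1 ?addr0 // => j /negbTE; rewrite eq_sym => ->.
rewrite exchange_big /= -IH; apply: eq_bigr => u _.
by rewrite -mulr_sumr (Pw_sum1 _ (Hpol u)) mulr1.
Qed.

Lemma dist_le1 t s s' : state_dist P pol t s s' <= 1.
Proof. rewrite -(dist_sum1 t s); apply: le_sum1; exact: dist_ge0. Qed.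

Lemma dist_back t s s' : state_dist P pol t.+1 s s' =
  \sum_s1 Pw (pol s) s s1 * state_dist P pol t s1 s'.
Proof.
elim: t s' => [|t IH] s'.
  by rewrite /= sum_delta_l sum_delta_r.
transitivity (\sum_u state_dist P pol t.+1 s u * Pw (pol u) u s'); first by [].
transitivity (\sum_u (\sum_s1 Pw (pol s) s s1 * state_dist P pol t s1 u) *
    Pw (pol u) u s').
  by apply: eq_bigr => u _; rewrite IH.
under eq_bigr do rewrite mulr_suml.
rewrite exchange_big /=; apply: eq_bigr => s1 _.
by rewrite mulr_sumr; apply: eq_bigr => u _; rewrite mulrA.
Qed.

Definition vt t s := \sum_s' state_dist P pol t s s' * stage_cost c h pol s'.

Lemma vt0 s : vt 0 s = stage_cost c h pol s.
Proof. exact: sum_delta_l. Qed.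

Lemma vtS t s : vt t.+1 s = \sum_s1 Pw (pol s) s s1 * vt t s1.
Proof.
rewrite /vt; under eq_bigr do rewrite dist_back mulr_suml.
rewrite exchange_big /=; apply: eq_bigr => s1 _.
by rewrite mulr_sumr; apply: eq_bigr => u _; rewrite mulrA.
Qed.

Definition Bc := \sum_s' `|stage_cost c h pol s'|.

Lemma vt_bound t s : `|vt t s| <= Bc.
Proof.
apply: (le_trans (ler_norm_sum _ _ _)); apply: ler_sum => s' _.
rewrite normrM ger0_norm ?dist_ge0 //.
rewrite -[leRHS]mul1r; apply: ler_wpM2r => //; exact: dist_le1.
Qed.

Definition Sn s N := \sum_(0 <= t < N) (gamma ^+ t * vt t s).

Lemma Sn_cvg s : Sn s N @[N --> \oo] --> Vfun P c h gamma pol s.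
Proof.
have : cvgn (series (fun t => gamma ^+ t * vt t s)).
  apply: (@geo_cvg _ _ Bc gamma) => // t.
  by rewrite normrM ger0_norm ?exprn_ge0 // mulrC ler_wpM2r ?exprn_ge0 ?vt_bound.
by [].
Qed.

Lemma SnS s N : Sn s N.+1 =
  stage_cost c h pol s + gamma * \sum_s1 Pw (pol s) s s1 * Sn s1 N.
Proof.
rewrite /Sn big_nat_recl // expr0 mul1r vt0; congr (_ + _).
rewrite [RHS]mulr_sumr.
under [RHS]eq_bigr do rewrite big_distrr big_distrr.
rewrite [RHS]exchange_big /=; apply: eq_bigr => t _.
rewrite vtS exprS !mulr_sumr; apply: eq_bigr => s1 _ /=; ring.
Qed.

Lemma bellmanV s : Vfun P c h gamma pol s =
  stage_cost c h pol s + gamma * \sum_s1 Pw (pol s) s s1 * Vfun P c h gamma pol s1.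
Proof.
have H1 : Sn s N.+1 @[N --> \oo] --> Vfun P c h gamma pol s.
  by rewrite (cvg_shiftS (fun N => Sn s N)); exact: Sn_cvg.
have H2 : Sn s N.+1 @[N --> \oo] --> stage_cost c h pol s +
    gamma * \sum_s1 Pw (pol s) s s1 * Vfun P c h gamma pol s1.
  under eq_cvg do rewrite SnS.
  apply: cvgD; first exact: cvg_cst.
  apply: cvgMr; apply: cvg_fsum => s1.
  apply: cvgMr; exact: Sn_cvg.
exact: (cvg_unique _ H1 H2).
Qed.

Definition QN s a N := \sum_(0 <= t < N)
    (match t with
     | 0 => c s a + h s (pol s)
     | t'.+1 => gamma ^+ t *
         \sum_(s1 : S) P s a s1 *
            \sum_(s' : S) state_dist P pol t' s1 s' * stage_cost c h pol s'
     end).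

Lemma bellmanQ s a : Qfun P c h gamma pol s a =
  c s a + h s (pol s) + gamma * \sum_s1 P s a s1 * Vfun P c h gamma pol s1.
Proof.
have E N : QN s a N.+1 = c s a + h s (pol s) + gamma * \sum_s1 P s a s1 * Sn s1 N.
  rewrite /QN big_nat_recl //; congr (_ + _).
  rewrite [RHS]mulr_sumr.
  under [RHS]eq_bigr do rewrite big_distrr big_distrr.
  rewrite [RHS]exchange_big /=; apply: eq_bigr => t _.
  rewrite exprS !mulr_sumr; apply: eq_bigr => s1 _ /=; rewrite /vt; ring.
have H2 : QN s a N.+1 @[N --> \oo] --> c s a + h s (pol s) +
    gamma * \sum_s1 P s a s1 * Vfun P c h gamma pol s1.
  under eq_cvg do rewrite E.
  apply: cvgD; first exact: cvg_cst.
  apply: cvgMr; apply: cvg_fsum => s1.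
  apply: cvgMr; exact: Sn_cvg.
have H1 : QN s a N @[N --> \oo] --> c s a + h s (pol s) +
    gamma * \sum_s1 P s a s1 * Vfun P c h gamma pol s1.
  by rewrite -(cvg_shiftS (fun N => QN s a N)).
exact: (cvg_lim _ H1).
Qed.

Lemma Qsum s p : \sum_a p a = 1 ->
  \sum_a Qfun P c h gamma pol s a * p a = \sum_a p a * c s a + h s (pol s) +
    gamma * \sum_s1 Pw p s s1 * Vfun P c h gamma pol s1.
Proof.
move=> p1.
have E1 : \sum_s1 Pw p s s1 * Vfun P c h gamma pol s1 =
    \sum_a p a * \sum_s1 P s a s1 * Vfun P c h gamma pol s1.
  rewrite /Pw; under eq_bigr do rewrite mulr_suml.
  rewrite exchange_big; apply: eq_bigr => a _ /=.
  by rewrite mulr_sumr; apply: eq_bigr => s1 _; rewrite mulrA.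
have E2 : h s (pol s) = \sum_a p a * h s (pol s) by rewrite -mulr_suml p1 mul1r.
rewrite E1 E2 mulr_sumr -!big_split; apply: eq_bigr => a _ /=.
rewrite bellmanQ; ring.
Qed.

End MDPaux.

Section Main.
Variables (R : realType) (S A : finType).
Variables (P : S -> A -> S -> R) (c : S -> A -> R) (h : S -> (A -> R) -> R)
  (gamma : R).
Hypothesis HP : transition_kernel P.
Hypothesis g0 : 0 <= gamma.
Hypothesis g1 : gamma < 1.

Lemma h_lb (f : (A -> R) -> R) (b : A -> R) : closed_convex_on_simplex f -> in_simplex b ->
  exists K, forall p, in_simplex p -> K <= f p.
Proof.
move=> [Hconv Hlsc] Hb.
have [d d0 Hd] := Hlsc b 1 Hb ltr01.
pose t := Num.min (d / 2) 1.
have t0 : 0 < t by rewrite lt_min divr_gt0 // ltr01.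
have t1 : t <= 1 by rewrite ge_min lexx orbT.
have td : t < d by rewrite gt_min; apply/orP; left; lra.
exists (f b - t^-1) => p Hp.
pose q := fun a => t * p a + (1 - t) * b a.
have Hq : in_simplex q.
  split.
    move=> a; apply: addr_ge0; apply: mulr_ge0; rewrite ?(ltW t0) ?subr_ge0 //.
      exact: Hp.1.
    exact: Hb.1.
  rewrite /q big_split -!mulr_sumr Hp.2 Hb.2 /=; ring.
have Hqb : forall a, `|q a - b a| < d.
  move=> a; have -> : q a - b a = t * (p a - b a) by rewrite /q; ring.
  rewrite normrM gtr0_norm //.
  have pa1 : p a <= 1 by rewrite -Hp.2; apply: le_sum1; exact: Hp.1.
  have ba1 : b a <= 1 by rewrite -Hb.2; apply: le_sum1; exact: Hb.1.
  have pa0 := Hp.1 a; have ba0 := Hb.1 a.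
  have H1 : `|p a - b a| <= 1 by rewrite ler_norml; apply/andP; split; lra.
  apply: le_lt_trans td; have := ler_wpM2l (ltW t0) H1; rewrite mulr1; exact.
have H1 := Hd q Hq Hqb.
have H2 : f q <= t * f p + (1 - t) * f b.
  apply: Hconv => //; rewrite (ltW t0) t1 //.
rewrite mulrBl mul1r in H2.
rewrite -(ler_pM2l t0) mulrBr mulfV ?gt_eqF //.
lra.
Qed.

Variable pistar : S -> A -> R.
Hypothesis Hps : feasible_policy pistar.
Hypothesis Hopt : forall pi' s, feasible_policy pi' ->
     Vfun P c h gamma pistar s <= Vfun P c h gamma pi' s.

Lemma key s p : in_simplex p -> Vfun P c h gamma pistar s <=
  \sum_a p a * c s a + h s p +
    gamma * \sum_s1 Pw P p s s1 * Vfun P c h gamma pistar s1.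
Proof.
move=> Hp.
pose pi' := fun u => if u == s then p else pistar u.
have Hpi' : feasible_policy pi' by move=> u; rewrite /pi'; case: (u == s).
have Hu u : u != s -> pi' u = pistar u by move=> /negbTE; rewrite /pi' => ->.
have Hs : pi' s = p by rewrite /pi' eqxx.
pose D u := Vfun P c h gamma pi' u - Vfun P c h gamma pistar u.
have D0 u : 0 <= D u by rewrite subr_ge0 Hopt.
pose e u := stage_cost c h pi' u +
  gamma * \sum_s1 Pw P (pi' u) u s1 * Vfun P c h gamma pistar s1 -
  Vfun P c h gamma pistar u.
have DE u : D u = gamma * \sum_s1 Pw P (pi' u) u s1 * D s1 + e u.
  have -> : \sum_s1 Pw P (pi' u) u s1 * D s1 =
     \sum_s1 Pw P (pi' u) u s1 * Vfun P c h gamma pi' s1 -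
     \sum_s1 Pw P (pi' u) u s1 * Vfun P c h gamma pistar s1.
    by rewrite -sumrB; apply: eq_bigr => s1 _; rewrite /D; ring.
  rewrite /D /e (bellmanV c h HP g0 g1 Hpi' u); ring.
have e0 u : u != s -> e u = 0.
  move=> us; rewrite /e.
  have -> : stage_cost c h pi' u = stage_cost c h pistar u by rewrite /stage_cost Hu.
  rewrite Hu // [X in _ - X](bellmanV c h HP g0 g1 Hps u); ring.
have es : e s = \sum_a p a * c s a + h s p +
    gamma * \sum_s1 Pw P p s s1 * Vfun P c h gamma pistar s1 -
    Vfun P c h gamma pistar s by rewrite /e /stage_cost Hs.
rewrite -subr_ge0 -es leNgt; apply/negP => Hlt.
pose m := bmax D.
have Dle u : D u <= gamma * m.
  rewrite DE.
  have X : \sum_s1 Pw P (pi' u) u s1 * D s1 <= m.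
    apply: wavg_le; [move=> ?; exact: (Pw_ge0 HP) | exact: (Pw_sum1 HP) |].
    move=> i; exact: le_bmax.
  have eu : e u <= 0.
    case: (eqVneq u s) => [->|us]; first exact: ltW.
    by rewrite e0.
  have := ler_wpM2l g0 X; lra.
have m0 : 0 <= m := le_trans (D0 s) (le_bmax D s).
have mm : m <= gamma * m := bmax_le (mulr_ge0 g0 m0) Dle.
have mle0 : m <= 0.
  have : (1 - gamma) * m <= 0 by rewrite mulrBl mul1r subr_le0.
  by rewrite pmulr_rle0 // subr_gt0.
have Dz u : D u = 0.
  apply/eqP; rewrite eq_le D0 andbT; exact: le_trans (le_bmax D u) mle0.
have := DE s; rewrite Dz big1 ?mulr0 ?add0r; last by move=> s1 _; rewrite Dz mulr0.
move=> H; move: Hlt; rewrite -H ltxx //.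
Qed.

End Main.

Theorem proposition2p2 (R : realType) (S A : finType)
  (P : S -> A -> S -> R) (c : S -> A -> R) (h : S -> (A -> R) -> R)
  (gamma : R) (pistar pi : S -> A -> R) :
  transition_kernel P ->
  0 <= gamma -> gamma < 1 ->
  (forall s, closed_convex_on_simplex (h s)) ->
  feasible_policy pistar ->
  (forall pi' s, feasible_policy pi' ->
     Vfun P c h gamma pistar s <= Vfun P c h gamma pi' s) ->
  feasible_policy pi ->
  forall s : S,
    adv_gap P c h gamma pi s <= Vfun P c h gamma pi s - Vfun P c h gamma pistar s /\
    Vfun P c h gamma pi s - Vfun P c h gamma pistar s
      <= (1 - gamma)^-1 * sup (range (adv_gap P c h gamma pi)).
Proof.
move=> HP g0 g1 Hh Hps Hopt Hpi s.
have negadv u p : in_simplex p -> - advantage P c h gamma pi u p =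
    Vfun P c h gamma pi u - (\sum_a p a * c u a + h u p +
      gamma * \sum_s1 Pw P p u s1 * Vfun P c h gamma pi s1).
  move=> Hp; rewrite /advantage (Qsum c h HP g0 g1 Hpi u Hp.2); ring.
split.
  rewrite /adv_gap; apply: ge_sup.
    by exists (- advantage P c h gamma pi s (pi s)); exists (pi s).
  move=> _ [p Hp <-]; rewrite negadv //; apply: lerB => //.
  apply: le_trans (key HP g0 g1 Hps Hopt s Hp) _.
  rewrite lerD2l; apply: ler_wpM2l => //; apply: ler_sum => s1 _.
  apply: ler_wpM2l; [exact: (Pw_ge0 HP) | exact: Hopt].
set G := sup (range (adv_gap P c h gamma pi)).
have hb (u : S) : has_ubound [set - advantage P c h gamma pi u p | p in @in_simplex R A].
  have [K HK] := h_lb (Hh u) (Hpi u).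
  exists (\sum_a `|Qfun P c h gamma pi u a| + Vfun P c h gamma pi u - K +
     h u (pi u)).
  move=> _ [p Hp <-]; rewrite /advantage.
  have A1 : - \sum_a Qfun P c h gamma pi u a * p a <=
      \sum_a `|Qfun P c h gamma pi u a|.
    rewrite -sumrN; apply: ler_sum => a _.
    apply: (le_trans (y := `|Qfun P c h gamma pi u a * p a|)).
      by rewrite -normrN ler_norm.
    rewrite normrM (ger0_norm (Hp.1 a)).
    have pa1 : p a <= 1 by rewrite -Hp.2; apply: le_sum1; exact: Hp.1.
    have := ler_wpM2l (normr_ge0 (Qfun P c h gamma pi u a)) pa1; rewrite mulr1; exact.
  have := HK p Hp; lra.
have gadv u : - advantage P c h gamma pi u (pistar u) <= adv_gap P c h gamma pi u.
  by apply: ub_le_sup (hb u) _ _; exists (pistar u).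
have gG u : adv_gap P c h gamma pi u <= G.
  apply: ub_le_sup; last by exists u.
  by exists (bmax (adv_gap P c h gamma pi)) => _ [v _ <-]; exact: le_bmax.
have G0 : 0 <= G.
  apply: le_trans (gG s).
  have Z : - advantage P c h gamma pi s (pi s) = 0.
    rewrite negadv // [Vfun P c h gamma pi s](bellmanV c h HP g0 g1 Hpi s) /stage_cost.
    ring.
  rewrite -Z; apply: ub_le_sup (hb s) _ _; by exists (pi s).
pose E u := Vfun P c h gamma pi u - Vfun P c h gamma pistar u.
have EE u : E u = - advantage P c h gamma pi u (pistar u) +
    gamma * \sum_s1 Pw P (pistar u) u s1 * E s1.
  have -> : \sum_s1 Pw P (pistar u) u s1 * E s1 =
     \sum_s1 Pw P (pistar u) u s1 * Vfun P c h gamma pi s1 -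
     \sum_s1 Pw P (pistar u) u s1 * Vfun P c h gamma pistar s1.
    by rewrite -sumrB; apply: eq_bigr => s1 _; rewrite /E; ring.
  rewrite negadv // /E [Vfun P c h gamma pistar u](bellmanV c h HP g0 g1 Hps u).
  rewrite /stage_cost; ring.
pose m := bmax E.
have m0 : 0 <= m.
  apply: le_trans (le_bmax E s); rewrite /E subr_ge0; exact: Hopt.
have Ele u : E u <= G + gamma * m.
  rewrite EE; apply: lerD; first exact: le_trans (gadv u) (gG u).
  apply: ler_wpM2l => //; apply: wavg_le.
  - move=> ?; exact: (Pw_ge0 HP).
  - exact: (Pw_sum1 HP).
  - move=> i; exact: le_bmax.
have mle : m <= G + gamma * m := bmax_le (addr_ge0 G0 (mulr_ge0 g0 m0)) Ele.
apply: (le_trans (le_bmax E s)).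
rewrite ler_pdivlMl ?subr_gt0 //.
rewrite -/m mulrBl mul1r lerBlDr; exact: mle.
Qed.
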